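(* Let $S$ be a square-free semigroup, $D$ a division ring, and let $(\alpha,\xi),(\beta,\zeta)\in Z^2(S,D^* )$ be 2-cocycles. If $[\beta,\zeta]=[\alpha^{\phi},\xi^{\phi}]$ in the thin 2-cohomology for some $\phi\in\mathrm{Aut}(S)$, then $D^{\beta}_{\zeta}S\cong D^{\alpha}_{\xi}S$ as rings. Consequently, for each $(\alpha,\xi)\in Z^2(S,D^* )$ there exists a normal $(\beta,\zeta)\in Z^2(S,D^* )$ with $D^{\beta}_{\zeta}S\cong D^{\alpha}_{\xi}S$.
   Context: $D$ is a division ring, $D^*$ its group of units, $\mathrm{Aut}(D)$ its group of ring automorphisms, and for $d\in D^*$, $\rho_d\in\mathrm{Aut}(D)$ is $\rho_d(x)=dxd^{-1}$. A square-free semigroup is a semigroup $S$ (product written $s\cdot t$) with zero $\theta$ together with a finite set $E\subseteq S$ of nonzero pairwise orthogonal idempotents such that $S=\bigcup_{e,f\in E}e\cdot S\cdot f$ and $|e\cdot S\cdot f\setminus\{\theta\}|\le 1$ for all $e,f\in E$. Write $S^*=S\setminus\{\theta\}$; each $s\in S^*$ satisfies $s=e\cdot s\cdot f$ for unique $e,f\in E$. $\mathrm{Aut}(S)$ is the group of semigroup automorphisms of $S$. Put $S^{<0>}=E$ and $S^{<n>}=\{(s_1,\dots,s_n)\in S^n: s_1\cdot s_2\cdots s_n\neq\theta\}$ for $n>0$; for a group $G$, $F^n(S,G)$ is the group (under pointwise multiplication) of functions $S^{<n>}\to G$. For $\alpha\in F^1(S,\mathrm{Aut}(D))$ and $\mu\in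 F^0(S,\mathrm{Aut}(D))$ write $\alpha_s=\alpha(s)$, $\mu_e=\mu(e)$. A 2-cocycle is a pair $(\alpha,\xi)\in F^1(S,\mathrm{Aut}(D))\times F^2(S,D^* )$ with $\alpha_s(\xi(t,u))\,\xi(s,t\cdot u)=\xi(s,t)\,\xi(s\cdot t,u)$ for all $(s,t,u)\in S^{<3>}$ and $\alpha_s\circ\alpha_t=\rho_{\xi(s,t)}\circ\alpha_{s\cdot t}$ for all $(s,t)\in S^{<2>}$; $Z^2(S,D^* )$ is the set of 2-cocycles. A 2-cocycle is normal if $\alpha_e=1_D$ and $\xi(e,e)=1$ for all $e\in E$. The group $F^0(S,\mathrm{Aut}(D))\ltimes F^1(S,D^* )$ acts on $Z^2(S,D^* )$ by $(\mu,\eta)*(\alpha,\xi)=(\beta,\zeta)$ where, for $s=e\cdot s\cdot f$, $t=f\cdot t\cdot g$ in $S^*$ with $s\cdot t\ne\theta$: $\mu_e\circ\beta_s\circ\mu_f^{-1}=\rho_{\eta(s)}\circ\alpha_s$ and $\mu_e(\zeta(s,t))=\eta(s)\,\alpha_s(\eta(t))\,\xi(s,t)\,\eta(s\cdot t)^{-1}$. The orbits form the thin 2-cohomology; $[\alpha,\xi]$ denotes the orbit of $(\alpha,\xi)$. For $\phi\in\mathrm{Aut}(S)$ define $(\alpha^{\phi},\xi^{\phi})$ by $\alpha^{\phi}_s=\alpha_{\phi(s)}$ and $\xi^{\phi}(s,t)=\xi(\phi(s),\phi(t))$. For $(\alpha,\xi)\in Z^2(S,D^* )$, $D^{\alpha}_{\xi}S$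 is the ring which is the left $D$-vector space with basis $S^*$ and multiplication extended by distributivity from $(d_1s)(d_2t)=d_1\,\alpha_s(d_2)\,\xi(s,t)\,(s\cdot t)$ if $s\cdot t\neq\theta$ and $0$ otherwise ($d_1,d_2\in D$, $s,t\in S^*$); in particular $sd=\alpha_s(d)s$ and $st=\xi(s,t)\,s\cdot t$. *)

(* Defs.v *)
From mathcomp Require Import all_boot all_order all_algebra.
Set Implicit Arguments. Unset Strict Implicit. Unset Printing Implicit Defensive.
Import GRing.Theory.
Local Open Scope ring_scope.

Section Defs.
Variable D : unitRingType.
Variable S : finType.
Variable mul : S -> S -> S.
Variable th : S.
Variable E : {set S}.

Definition division_ring (R : unitRingType) : Prop :=
  forall x : R, x != 0 -> x \is a GRing.unit.

Definition square_free : Prop :=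
  (forall s t u, mul s (mul t u) = mul (mul s t) u) /\
  (forall s, mul th s = th /\ mul s th = th) /\
  [/\ forall e, e \in E -> e != th /\ mul e e = e,
      forall e f, e \in E -> f \in E -> e != f -> mul e f = th,
      forall s, exists e f t, [/\ e \in E, f \in E & s = mul (mul e t) f]
    & forall e f, e \in E -> f \in E -> forall x y,
        x != th -> y != th ->
        (exists t, x = mul (mul e t) f) -> (exists t, y = mul (mul e t) f) ->
        x = y].

Definition semigroup_aut (phi : S -> S) : Prop :=
  bijective phi /\ forall s t, phi (mul s t) = mul (phi s) (phi t).

Definition ring_aut (a : D -> D) : Prop :=
  [/\ forall x y, a (x + y) = a x + a y,
      forall x y, a (x * y) = a x * a y,
      a 1 = 1 & bijective a].

Definition rho (d : D) (x : D) : D := d * x * d^-1.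

(* 2-cocycles: alpha in F^1(S, Aut D) (values at th irrelevant),
   xi in F^2(S, D^* ) (values outside S^<2> irrelevant). *)
Definition cocycle (alpha : S -> D -> D) (xi : S -> S -> D) : Prop :=
  [/\ forall s, s != th -> ring_aut (alpha s),
      forall s t, mul s t != th -> xi s t \is a GRing.unit,
      forall s t u, mul (mul s t) u != th ->
        alpha s (xi t u) * xi s (mul t u) = xi s t * xi (mul s t) u
    & forall s t, mul s t != th ->
        forall x, alpha s (alpha t x) = rho (xi s t) (alpha (mul s t) x)].

Definition normal_cocycle (alpha : S -> D -> D) (xi : S -> S -> D) : Prop :=
  forall e, e \in E -> (forall x, alpha e x = x) /\ xi e e = 1.

(* (mu, eta) * (alpha, xi) = (beta, zeta); the identity
   mu_e o beta_s o mu_f^-1 = rho_{eta s} o alpha_s is written in the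
   equivalent form mu_e o beta_s = rho_{eta s} o alpha_s o mu_f. *)
Definition acts_to (mu : S -> D -> D) (eta : S -> D)
    (alpha : S -> D -> D) (xi : S -> S -> D)
    (beta : S -> D -> D) (zeta : S -> S -> D) : Prop :=
  [/\ forall e, e \in E -> ring_aut (mu e),
      forall s, s != th -> eta s \is a GRing.unit,
      forall s e f, s != th -> e \in E -> f \in E -> s = mul (mul e s) f ->
        forall x, mu e (beta s x) = rho (eta s) (alpha s (mu f x))
    & forall s t e f g, e \in E -> f \in E -> g \in E ->
        s = mul (mul e s) f -> t = mul (mul f t) g -> mul s t != th ->
        mu e (zeta s t) = eta s * alpha s (eta t) * xi s t * (eta (mul s t))^-1].

(* equality of thin cohomology classes: (beta,zeta) lies in the orbit of
   (alpha,xi) *)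
Definition cohomologous (alpha : S -> D -> D) (xi : S -> S -> D)
    (beta : S -> D -> D) (zeta : S -> S -> D) : Prop :=
  exists mu eta, acts_to mu eta alpha xi beta zeta.

(* The ring D^alpha_xi S: elements are D-valued functions on S vanishing at th
   (coefficients w.r.t. the basis S^* ); addition is pointwise and
   multiplication is the twisted convolution below. *)
Definition skew_carrier (x : {ffun S -> D}) : Prop := x th = 0.

Definition skew_mul (alpha : S -> D -> D) (xi : S -> S -> D)
    (x y : {ffun S -> D}) : {ffun S -> D} :=
  [ffun u => if u == th then 0 else
     \sum_(s | s != th) \sum_(t | (t != th) && (mul s t == u))
        x s * alpha s (y t) * xi s t].

Definition skew_iso (beta : S -> D -> D) (zeta : S -> S -> D)
    (alpha : S -> D -> D) (xi : S -> S -> D) : Prop :=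
  exists Phi : {ffun S -> D} -> {ffun S -> D},
    [/\ forall x, skew_carrier x -> skew_carrier (Phi x),
        forall x y, skew_carrier x -> skew_carrier y -> Phi x = Phi y -> x = y,
        forall y, skew_carrier y -> exists2 x, skew_carrier x & Phi x = y,
        forall x y, skew_carrier x -> skew_carrier y -> Phi (x + y) = Phi x + Phi y
      & forall x y, skew_carrier x -> skew_carrier y ->
          Phi (skew_mul beta zeta x y) = skew_mul alpha xi (Phi x) (Phi y)].

End Defs.

(* Main.v *)
Require Import Defs.
From mathcomp Require Import all_boot all_order all_algebra.
Set Implicit Arguments. Unset Strict Implicit. Unset Printing Implicit Defensive.
Import GRing.Theory.
Local Open Scope ring_scope.

Section RA.
Variable D : unitRingType.

Lemma ra0 (a : D -> D) : ring_aut a -> a 0 = 0.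
Proof. case=> aD _ _ _; apply: (addrI (a 0)); by rewrite addr0 -aD addr0. Qed.

Lemma ra_sum (a : D -> D) (I : finType) (P : pred I) (F : I -> D) :
  ring_aut a -> a (\sum_(i | P i) F i) = \sum_(i | P i) a (F i).
Proof. move=> h; have [aD _ _ _] := h; exact: (big_morph a aD (ra0 h)). Qed.

Lemma raM (a : D -> D) x y : ring_aut a -> a (x * y) = a x * a y.
Proof. by case. Qed.

Lemma ra_unit (a : D -> D) u : ring_aut a -> u \is a GRing.unit ->
  a u \is a GRing.unit /\ a (u^-1) = (a u)^-1.
Proof.
case=> aD aM a1 _ hu.
have h1 : a u * a u^-1 = 1 by rewrite -aM mulrV.
have h2 : a u^-1 * a u = 1 by rewrite -aM mulVr.
have U : a u \is a GRing.unit by apply/unitrP; exists (a u^-1).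
split=> //; apply: (mulrI U); by rewrite h1 mulrV.
Qed.

Lemma rho_aut (d : D) : d \is a GRing.unit -> ring_aut (rho d).
Proof.
move=> hd; split.
- by move=> x y; rewrite /rho mulrDr mulrDl.
- by move=> x y; rewrite /rho -!mulrA (mulKr hd).
- by rewrite /rho mulr1 mulrV.
exists (rho d^-1) => x; rewrite /rho invrK !mulrA.
  by rewrite mulVr // mul1r mulrVK.
by rewrite mulrV // mul1r mulrK.
Qed.

Lemma ra_comp (a b : D -> D) : ring_aut a -> ring_aut b -> ring_aut (fun x => a (b x)).
Proof.
case=> aD aM a1 ab [bD bM b1 bb]; split.
- by move=> x y; rewrite bD aD.
- by move=> x y; rewrite bM aM.
- by rewrite b1 a1.
exact: (bij_comp ab bb).
Qed.

Lemma ra_id : ring_aut (fun x : D => x).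
Proof. by split=> //; exists id. Qed.
End RA.

Section SG.
Variables (S : finType) (mul : S -> S -> S) (th : S) (E : {set S}).
Hypothesis sq : square_free mul th E.

Let mulA : forall s t u, mul s (mul t u) = mul (mul s t) u.
Proof. by case: sq. Qed.
Let th0l s : mul th s = th. Proof. by case: sq => _ [h _]; case: (h s). Qed.
Let th0r s : mul s th = th. Proof. by case: sq => _ [h _]; case: (h s). Qed.
Let idem e : e \in E -> e != th /\ mul e e = e.
Proof. by case: sq => _ [_ [h _ _ _]]; apply: h. Qed.
Let orth e f : e \in E -> f \in E -> e != f -> mul e f = th.
Proof. by case: sq => _ [_ [_ h _ _]]; apply: h. Qed.
Let decomp s : exists e f t, [/\ e \in E, f \in E & s = mul (mul e t) f].
Proof. by case: sq => _ [_ [_ _ h _]]; apply: h. Qed.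

Lemma sq_neql s t : mul s t != th -> s != th.
Proof. by apply: contra => /eqP ->; rewrite th0l. Qed.
Lemma sq_neqr s t : mul s t != th -> t != th.
Proof. by apply: contra => /eqP ->; rewrite th0r. Qed.

Definition lid s := odflt th [pick e in E | mul e s == s].
Definition rid s := odflt th [pick f in E | mul s f == s].

Lemma decomp2 s : exists e f, [/\ e \in E, f \in E, mul e s = s & mul s f = s].
Proof.
have [e [f [t [he hf hs]]]] := decomp s.
exists e, f; split=> //.
  by rewrite hs !mulA (idem he).2.
by rewrite hs -!mulA (idem hf).2.
Qed.

Lemma lid_spec s : lid s \in E /\ mul (lid s) s = s.
Proof.
rewrite /lid; case: pickP => [e /andP[he /eqP h] | none] //=.
have [e [f [he hf h1 h2]]] := decomp2 s.
by have := none e; rewrite he h1 eqxx.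
Qed.

Lemma rid_spec s : rid s \in E /\ mul s (rid s) = s.
Proof.
rewrite /rid; case: pickP => [e /andP[he /eqP h] | none] //=.
have [e [f [he hf h1 h2]]] := decomp2 s.
by have := none f; rewrite hf h2 eqxx.
Qed.

Lemma lid_uniq s e : s != th -> e \in E -> mul e s = s -> e = lid s.
Proof.
move=> sn he hs; have [hl hls] := lid_spec s.
case: (eqVneq e (lid s)) => // ne; case/eqP: sn.
have h : mul (mul e (lid s)) s = th by rewrite (orth he hl ne) th0l.
by rewrite -mulA hls hs in h.
Qed.

Lemma rid_lid s t : mul s t != th -> rid s = lid t.
Proof.
move=> st; case: (eqVneq (rid s) (lid t)) => // ne; case/eqP: st.
have [hr hrs] := rid_spec s; have [hl hlt] := lid_spec t.
have : mul (mul s (rid s)) (mul (lid t) t) = th.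
  by rewrite -mulA (mulA (rid s)) (orth hr hl ne) th0l th0r.
by rewrite hrs hlt.
Qed.

Lemma lid_mul s t : mul s t != th -> lid (mul s t) = lid s.
Proof.
move=> st; have [hl hls] := lid_spec s.
by symmetry; apply: lid_uniq => //; rewrite mulA hls.
Qed.

Lemma lr_decomp s : s = mul (mul (lid s) s) (rid s).
Proof. by rewrite (lid_spec s).2 (rid_spec s).2. Qed.

Lemma idem_neq e : e \in E -> mul e e != th.
Proof. by move=> he; rewrite (idem he).2 (idem he).1. Qed.

Lemma idem_mul e : e \in E -> mul e e = e.
Proof. by move=> he; rewrite (idem he).2. Qed.

Lemma sq_mulA s t u : mul s (mul t u) = mul (mul s t) u.
Proof. exact: mulA. Qed.

Lemma part1 (D : unitRingType) (alpha beta : S -> D -> D) (xi zeta : S -> S -> D)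
    (phi : S -> S) (mu : S -> D -> D) (eta : S -> D) :
  (forall s, s != th -> ring_aut (alpha s)) ->
  semigroup_aut mul phi ->
  acts_to mul th E mu eta (fun s => alpha (phi s)) (fun s t => xi (phi s) (phi t)) beta zeta ->
  skew_iso mul th beta zeta alpha xi.
Proof.
move=> hal [[psi K1 K2] phiM] [hmu heta hc hd].
have phith : phi th = th.
  by have := phiM th (psi th); rewrite th0l K2 th0r.
have phie s : (phi s == th) = (s == th) by rewrite -{1}phith (inj_eq (can_inj K1)).
have phin s : (phi s != th) = (s != th) by rewrite phie.
have psin u : (psi u != th) = (u != th) by rewrite -phin K2.
have mu_aut s : ring_aut (mu (lid s)) := hmu _ (lid_spec s).1.
pose Phi := fun x : {ffun S -> D} => [ffun u => if u == th then 0 else mu (lid (psi u)) (x (psi u)) * eta (psi u)].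
have PhiE x s : s != th -> Phi x (phi s) = mu (lid s) (x s) * eta s.
  by move=> sn; rewrite ffunE phie (negbTE sn) K1.
exists Phi; split.
- by move=> x _; rewrite /skew_carrier ffunE eqxx.
- move=> x y hx hy hxy; apply/ffunP => s.
  case: (eqVneq s th) => [-> | sn]; first by rewrite hx hy.
  have := congr1 (fun F : {ffun S -> D} => F (phi s)) hxy; rewrite /= !PhiE //.
  move/(mulIr (heta s sn)); have [_ _ _ hb] := mu_aut s; exact: (bij_inj hb).
- move=> y hy.
  have [F hF] : exists F : S -> D, forall s, s != th -> mu (lid s) (F s) * eta s = y (phi s).
    apply: (fin_all_exists (P := fun s d => s != th -> mu (lid s) d * eta s = y (phi s))) => s.
    case: (eqVneq s th) => [-> | sn]; first by exists 0.
    have [_ _ _ [g _ hg]] := mu_aut s.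
    by exists (g (y (phi s) * (eta s)^-1)) => _; rewrite hg mulrVK // heta.
  exists [ffun s => if s == th then 0 else F s]; first by rewrite /skew_carrier ffunE eqxx.
  apply/ffunP => u; rewrite ffunE.
  case: (eqVneq u th) => [-> | un]; first by rewrite hy.
  have pn : psi u != th by rewrite psin.
  by rewrite ffunE (negbTE pn) hF // K2.
- move=> x y hx hy; apply/ffunP => u; rewrite !ffunE.
  case: (u == th); first by rewrite addr0.
  have [hD _ _ _] := mu_aut (psi u); by rewrite hD mulrDl.
move=> x y hx hy; apply/ffunP => u.
have [s0 ->] : exists s0, u = phi s0 by exists (psi u); rewrite K2.
case: (eqVneq s0 th) => [-> | sn].
  by rewrite phith !ffunE eqxx.
have pn : phi s0 != th by rewrite phin.
rewrite PhiE // /skew_mul !ffunE (negbTE sn) (negbTE pn).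
rewrite (ra_sum _ _ (mu_aut s0)) mulr_suml [RHS](reindex_inj (can_inj K1)) /=.
apply: eq_big => [s | s sn']; first by rewrite phin.
rewrite (ra_sum _ _ (mu_aut s0)) mulr_suml [RHS](reindex_inj (can_inj K1)) /=.
apply: eq_big => [t | t /andP[tn /eqP st]].
  by rewrite phin -phiM (inj_eq (can_inj K1)).
subst s0.
rewrite !PhiE // lid_mul //.
have [hmD hmM _ _] := mu_aut s; rewrite !hmM.
have hs : s = mul (mul (lid s) s) (lid t) by rewrite -(rid_lid sn) -lr_decomp.
rewrite (hc s (lid s) (lid t) sn' (lid_spec s).1 (lid_spec t).1 hs).
rewrite (hd s t (lid s) (lid t) (rid t) (lid_spec s).1 (lid_spec t).1 (rid_spec t).1 hs (lr_decomp t) sn).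
have ha : ring_aut (alpha (phi s)) by apply: hal; rewrite phin.
rewrite (raM _ _ ha) /rho !mulrA (mulrVK (heta _ sn)) (mulrVK (heta _ sn')).
by [].
Qed.

Lemma act_cocycle (D : unitRingType) (alpha : S -> D -> D) (xi : S -> S -> D) (eta : S -> D) :
  cocycle mul th alpha xi -> (forall s, s != th -> eta s \is a GRing.unit) ->
  cocycle mul th (fun s x => rho (eta s) (alpha s x))
    (fun s t => eta s * alpha s (eta t) * xi s t * (eta (mul s t))^-1).
Proof.
move=> [hal hxi hc1 hc2] he; split.
- move=> s sn; apply: ra_comp; [exact: (rho_aut (he s sn)) | exact: hal].
- move=> s t st; have sn := sq_neql st; have tn := sq_neqr st.
  have [ua _] := ra_unit (hal s sn) (he t tn).
  rewrite (unitrMl _ (_ : (eta (mul s t))^-1 \is a GRing.unit)); last by rewrite unitrV he.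
  by rewrite (unitrMl _ (hxi _ _ st)) (unitrMl _ ua) he // .
- move=> s t u stu /=.
  have st := sq_neql stu; have un := sq_neqr stu.
  have sn := sq_neql st; have tn := sq_neqr st.
  have tu : mul t u != th by apply: (@sq_neqr s); rewrite mulA.
  have [hD hM _ _] := hal s sn.
  have [ub hb] := ra_unit (hal s sn) (he _ tu).
  rewrite /rho !hM hb (hc2 s t st (eta u)) /rho.
  rewrite !mulrA (mulrVK (he _ sn)) (mulrVK ub) (mulrVK (he _ st)).
  rewrite mulA -(mulrA _ (alpha s (xi t u))) -mulA hc1 // mulrA (mulrVK (hxi _ _ st)).
  by rewrite mulA.
move=> s t st x /=; have sn := sq_neql st; have tn := sq_neqr st.
have [hD hM _ _] := hal s sn.
have [ua ha] := ra_unit (hal s sn) (he t tn).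
have u1 : eta s * alpha s (eta t) \is a GRing.unit by rewrite unitrMl // he.
have u2 : eta s * alpha s (eta t) * xi s t \is a GRing.unit by rewrite unitrMl // hxi.
have u3 : (eta (mul s t))^-1 \is a GRing.unit by rewrite unitrV he.
rewrite /rho !hM ha (hc2 s t st x) /rho.
rewrite (invrM u2 u3) invrK (invrM u1 (hxi _ _ st)) (invrM (he _ sn) ua).
by rewrite !mulrA !(mulrVK (he _ st)).
Qed.
End SG.

Theorem mainTheorem1 (D : unitRingType) (S : finType) (mul : S -> S -> S)
    (th : S) (E : {set S}) :
  division_ring D -> square_free mul th E ->
  (forall (alpha beta : S -> D -> D) (xi zeta : S -> S -> D),
     cocycle mul th alpha xi -> cocycle mul th beta zeta ->
     (exists phi : S -> S, semigroup_aut mul phi /\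
        cohomologous mul th E (fun s => alpha (phi s))
          (fun s t => xi (phi s) (phi t)) beta zeta) ->
     skew_iso mul th beta zeta alpha xi)
  /\
  (forall (alpha : S -> D -> D) (xi : S -> S -> D),
     cocycle mul th alpha xi ->
     exists (beta : S -> D -> D) (zeta : S -> S -> D),
       [/\ cocycle mul th beta zeta, normal_cocycle E beta zeta
         & skew_iso mul th beta zeta alpha xi]).
Proof.
move=> _ sq; split.
  move=> alpha beta xi zeta [hal _ _ _] _ [phi [hphi [mu [eta hact]]]].
  exact: (part1 sq hal hphi hact).
move=> alpha xi hco; have [hal hxi hc1 hc2] := hco.
pose eta s := if s \in E then (xi s s)^-1 else 1.
have he s : s != th -> eta s \is a GRing.unit.
  rewrite /eta; case: ifP => hs sn; last exact: unitr1.
  rewrite unitrV; apply: hxi; exact: (idem_neq sq hs).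
exists (fun s x => rho (eta s) (alpha s x)),
  (fun s t => eta s * alpha s (eta t) * xi s t * (eta (mul s t))^-1).
split.
- exact: (act_cocycle sq hco he).
- move=> e hE /=.
  have een := idem_neq sq hE; have eem := idem_mul sq hE.
  have en : e != th by rewrite -eem.
  have xu := hxi e e een.
  have ae y : alpha e y = rho (xi e e) y.
    have [_ _ _ [g _ hg]] := hal e en.
    by rewrite -(hg y) (hc2 e e een) eem.
  have etae : eta e = (xi e e)^-1 by rewrite /eta hE.
  split.
    by move=> x; rewrite ae etae /rho invrK !mulrA mulVr // mul1r mulrVK.
  rewrite eem etae ae /rho invrK !mulrA mulVr // mul1r mulrVK //.
  by rewrite mulVr.
apply: (part1 (mu := fun _ x => x) (eta := eta) sq hal (_ : semigroup_aut mul (fun s => s))).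
  by split => //; exists id.
split=> //.
by move=> e _; exact: ra_id.
Qed.
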